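(* If $p,q\in\mathbf P(S)$ for a DRC-semigroup $S$, and $pq=qp$, then (i) the meet $p\wedge q$ exists in the poset $(\mathbf P(S),\le)$ and $p\wedge q=pq=qp$; (ii) $p\,\mathscr F\,q\iff p=q$.
   Context: A DRC-semigroup is $(S,\cdot,D,R)$, $(S,\cdot)$ a semigroup, $D,R:S\to S$ with, for all $a,b$: $D(a)a=a$, $aR(a)=a$; $D(ab)=D(aD(b))$, $R(ab)=R(R(a)b)$; $D(ab)=D(a)D(ab)D(a)$, $R(ab)=R(b)R(ab)R(b)$; $R(D(a))=D(a)$, $D(R(a))=R(a)$. $\mathbf P(S)=\{D(a):a\in S\}$, partially ordered by $p\le q\iff p=pq=qp$. For $p,q\in\mathbf P(S)$: $q\theta_p=R(qp)$, $q\delta_p=D(pq)$, and $p\,\mathscr F\,q$ means $p=q\delta_p$ and $q=p\theta_q$. *)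

(* Defs.v *)
Record DRCSemigroup := {
  carrier :> Type;
  mul : carrier -> carrier -> carrier;
  Dop : carrier -> carrier;
  Rop : carrier -> carrier;
  mul_assoc : forall a b c, mul a (mul b c) = mul (mul a b) c;
  D_left : forall a, mul (Dop a) a = a;
  R_right : forall a, mul a (Rop a) = a;
  D_mul : forall a b, Dop (mul a b) = Dop (mul a (Dop b));
  R_mul : forall a b, Rop (mul a b) = Rop (mul (Rop a) b);
  D_sandwich : forall a b, Dop (mul a b) = mul (mul (Dop a) (Dop (mul a b))) (Dop a);
  R_sandwich : forall a b, Rop (mul a b) = mul (mul (Rop b) (Rop (mul a b))) (Rop b);
  RD : forall a, Rop (Dop a) = Dop a;
  DR : forall a, Dop (Rop a) = Rop a
}.

Section Defs.
Variable S : DRCSemigroup.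
Local Notation "x * y" := (mul S x y).

Definition is_proj (p : S) : Prop := exists a : S, p = Dop S a.

Definition ple (p q : S) : Prop := p = p * q /\ p = q * p.

(** q theta_p = R(qp), q delta_p = D(pq). *)
Definition theta (q p : S) : S := Rop S (q * p).
Definition delta (q p : S) : S := Dop S (p * q).

Definition Frel (p q : S) : Prop := p = delta q p /\ q = theta p q.

Definition is_meet (p q m : S) : Prop :=
  is_proj m /\ ple m p /\ ple m q /\
  (forall r : S, is_proj r -> ple r p -> ple r q -> ple r m).
End Defs.

(* Main.v *)
Require Import Defs.
From Stdlib Require Import Setoid.

Section H.
Variable S : DRCSemigroup.
Local Notation "x * y" := (mul S x y).
Local Notation A := (mul_assoc S).

Lemma proj_idem p : is_proj S p -> p * p = p /\ Rop S p = p /\ Dop S p = p.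
Proof.
  intros [a ->]. rewrite (RD S a). split; [|split; auto].
  - pattern (Dop S a) at 2. rewrite <- (RD S a). apply R_right.
  - transitivity (Dop S (Rop S (Dop S a))); [rewrite (RD S a); reflexivity|]. rewrite (DR S). apply RD.
Qed.

Lemma D_comm p q : is_proj S p -> is_proj S q -> p * q = q * p -> Dop S (p * q) = p * q.
Proof.
  intros Hp Hq C.
  destruct (proj_idem p Hp) as [pp [_ Dp]]. destruct (proj_idem q Hq) as [qq [_ Dq]].
  set (d := Dop S (p * q)).
  assert (E1 : d = p * d * p) by (unfold d; rewrite (D_sandwich S p q) at 1; rewrite Dp; reflexivity).
  assert (E2 : d = q * d * q) by (unfold d; rewrite C; rewrite (D_sandwich S q p) at 1; rewrite Dq; reflexivity).
  assert (E3 : d * (p * q) = p * q) by apply D_left.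
  assert (I : (p*q)*(p*q) = p*q).
  { rewrite A. rewrite <- (A p q p). rewrite <- C. rewrite (A p p q), pp, <- A, qq. reflexivity. }
  assert (E4 : d = (p*q) * d * (p*q)).
  { rewrite E1 at 1. rewrite E2 at 1. rewrite C at 2.
    rewrite !A. reflexivity. }
  rewrite E4. rewrite <- A. rewrite E3. exact I.
Qed.

Lemma R_comm p q : is_proj S p -> is_proj S q -> p * q = q * p -> Rop S (p * q) = p * q.
Proof.
  intros Hp Hq C.
  destruct (proj_idem p Hp) as [pp [Rp _]]. destruct (proj_idem q Hq) as [qq [Rq _]].
  set (d := Rop S (p * q)).
  assert (E1 : d = q * d * q) by (unfold d; rewrite (R_sandwich S p q) at 1; rewrite Rq; reflexivity).
  assert (E2 : d = p * d * p) by (unfold d; rewrite C; rewrite (R_sandwich S q p) at 1; rewrite Rp; reflexivity).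
  assert (E3 : (p * q) * d = p * q) by apply R_right.
  assert (I : (p*q)*(p*q) = p*q).
  { rewrite A. rewrite <- (A p q p). rewrite <- C. rewrite (A p p q), pp, <- A, qq. reflexivity. }
  assert (E4 : d = (p*q) * d * (p*q)).
  { rewrite E2 at 1. rewrite E1 at 1.
    transitivity ((p*q)*d*(q*p)); [rewrite !A; reflexivity | rewrite C; reflexivity]. }
  rewrite E4. rewrite E3. exact I.
Qed.

Lemma meet_pq p q : is_proj S p -> is_proj S q -> p * q = q * p -> is_meet S p q (p * q).
Proof.
  intros Hp Hq C.
  destruct (proj_idem p Hp) as [pp _]. destruct (proj_idem q Hq) as [qq _].
  split; [|split; [|split]].
  - exists (p * q). symmetry. apply D_comm; auto.
  - split.
    + transitivity (p*(q*p)); [rewrite <- C, A, pp; reflexivity | rewrite A; reflexivity].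
    + rewrite A, pp. reflexivity.
  - split.
    + rewrite <- A, qq. reflexivity.
    + rewrite C at 2. rewrite A, qq. exact C.
  - intros r _ [r1 r2] [r3 r4]. split.
    + rewrite A, <- r1. exact r3.
    + rewrite <- A, <- r4. exact r2.
Qed.
End H.

Theorem corollary10p2 (S : DRCSemigroup) (p q : S) :
  is_proj S p -> is_proj S q -> mul S p q = mul S q p ->
  (is_meet S p q (mul S p q) /\ is_meet S p q (mul S q p)) /\
  (Frel S p q <-> p = q).
Proof.
  intros Hp Hq C.
  split.
  - split; [apply meet_pq; auto|]. rewrite <- C. apply meet_pq; auto.
  - unfold Frel, delta, theta. split.
    + intros [H1 H2]. rewrite D_comm in H1 by auto. rewrite R_comm in H2 by auto.
      rewrite H1, <- H2. reflexivity.
    + intros <-. destruct (proj_idem S p Hp) as [pp [Rp Dp]].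
      rewrite pp, Dp, Rp. auto.
Qed.
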